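(* Let $4\le k\le\infty$. Suppose that a simplicial complex $X$ is obtained from two flag simplicial complexes $A$ and $B$ by gluing them along a simplex. Then $X$ is $k$-large if and only if both $A$ and $B$ are $k$-large.
   Context: A simplicial complex is flag if every set of pairwise adjacent vertices spans a simplex. A cycle in a complex is a subcomplex that is a subdivision of the circle; a subcomplex is full if every simplex of the ambient complex spanned by its vertices lies in it. For $4\le k\le\infty$, a flag simplicial complex is $k$-large if it has no full cycle of length $<k$. *)

(* Defs.v *)
From HB Require Import structures.
From mathcomp Require Import all_boot all_order.
From mathcomp Require Import finmap.
Set Implicit Arguments. Unset Strict Implicit. Unset Printing Implicit Defensive.
Local Open Scope fset_scope.

(* An (abstract) simplicial complex on the vertex type V is given by its set of
   simplices: nonempty finite subsets of V, closed under passing to nonempty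
   subsets. *)
Definition is_complex (V : choiceType) (X : {fset V} -> Prop) : Prop :=
  (forall s, X s -> s != fset0) /\
  (forall s t, X s -> t `<=` s -> t != fset0 -> X t).

Definition is_vertex (V : choiceType) (X : {fset V} -> Prop) (v : V) : Prop :=
  X [fset v].

Definition is_flag (V : choiceType) (X : {fset V} -> Prop) : Prop :=
  is_complex X /\
  forall s : {fset V}, s != fset0 ->
    (forall v, v \in s -> is_vertex X v) ->
    (forall u v, u \in s -> v \in s -> u != v -> X [fset u; v]) ->
    X s.

(* The cycle determined by a sequence c of n >= 3 distinct vertices
   v_0, ..., v_(n-1): the 1-dimensional complex (triangulated circle, n-gon)
   whose simplices are the vertices v_i and the edges {v_i, v_(i+1 mod n)}
   ([next c] is the cyclic successor in c).  Its length is n = size c. *)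
Definition cycle_cx (V : choiceType) (c : seq V) : {fset V} -> Prop :=
  fun s => (exists2 x, x \in c & s = [fset x]) \/
           (exists2 x, x \in c & s = [fset x; next c x]).

Definition full_cycle (V : choiceType) (X : {fset V} -> Prop) (c : seq V) : Prop :=
  [/\ uniq c, 3 <= size c,
      (forall s, cycle_cx c s -> X s) &
      (forall s, X s -> {subset s <= c} -> cycle_cx c s)].

(* Extended naturals {4,...,oo}: [Some k] is k, [None] is oo. *)
Definition lt_ext (n : nat) (k : option nat) : Prop :=
  if k is Some m then n < m else True.

Definition k_large (V : choiceType) (k : option nat) (X : {fset V} -> Prop) : Prop :=
  is_flag X /\ forall c, full_cycle X c -> ~ lt_ext (size c) k.

(* X is obtained from the complexes A and B (realised as subcomplexes on a common
   vertex type) by gluing them along a simplex sigma: X = A u B, sigma is a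
   simplex of both A and B, and A, B share exactly the vertices of sigma. *)
Definition glued_along_simplex (V : choiceType) (X A B : {fset V} -> Prop) : Prop :=
  (forall s, X s <-> A s \/ B s) /\
  exists sigma : {fset V},
    [/\ A sigma, B sigma &
        forall v, is_vertex A v -> is_vertex B v -> v \in sigma].

(* Main.v *)
Require Import Defs.
From HB Require Import structures.
From mathcomp Require Import all_boot all_order.
From mathcomp Require Import finmap.
From Stdlib Require Import Classical ClassicalEpsilon.
Set Implicit Arguments. Unset Strict Implicit. Unset Printing Implicit Defensive.
Local Open Scope fset_scope.


Lemma ne0_of_mem (V : choiceType) (s : {fset V}) v : v \in s -> s != fset0.
Proof. by move=> vs; apply/negP => /eqP E; rewrite E in_fset0 in vs. Qed.

Lemma vert_of (V : choiceType) (X : {fset V} -> Prop) s v :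
  is_complex X -> X s -> v \in s -> is_vertex X v.
Proof.
move=> [_ sub] Xs vs; apply: (sub s) => //; first by rewrite fsub1set.
exact: (ne0_of_mem (fset11 v)).
Qed.

Lemma B_to_A (V : choiceType) (A B : {fset V} -> Prop) sigma s :
  is_complex A -> is_complex B -> A sigma ->
  (forall v, is_vertex A v -> is_vertex B v -> v \in sigma) ->
  B s -> (forall v, v \in s -> is_vertex A v) -> A s.
Proof.
move=> cA cB As Hsh Bs HA; case: (cA) => _ sub; apply: (sub sigma) => //.
  apply/fsubsetP => v vs; apply: Hsh; first exact: HA.
  exact: (vert_of cB Bs vs).
by case: cB => ne _; apply: ne.
Qed.

Lemma glued_sym (V : choiceType) (X A B : {fset V} -> Prop) :
  glued_along_simplex X A B -> glued_along_simplex X B A.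
Proof.
move=> [HX [sigma [As Bs Hsh]]]; split.
  by move=> s; rewrite HX; tauto.
by exists sigma; split => // v h1 h2; apply: Hsh.
Qed.

Lemma cycle_mem (V : choiceType) (c : seq V) s v :
  cycle_cx c s -> v \in s -> v \in c.
Proof.
move=> [[x xc ->]|[x xc ->]].
  by move/fset1P ->.
by case/fset2P => ->; rewrite ?mem_next.
Qed.

Definition pb (V : Type) (P : V -> Prop) : pred V :=
  fun v => if excluded_middle_informative (P v) then true else false.

Lemma pbP (V : Type) (P : V -> Prop) v : reflect (P v) (pb P v).
Proof. by rewrite /pb; case: excluded_middle_informative => h; constructor. Qed.

Lemma path_back (V : eqType) (e : rel V) (P : pred V) :
  (forall u v, e u v -> P v -> P u) ->
  forall s h, path e h s -> P (last h s) -> forall z, z \in h :: s -> P z.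
Proof.
move=> He; elim=> [|b s IH] h /=.
  by move=> _ Ph z; rewrite inE => /eqP ->.
case/andP=> ehb pbs Pl.
have Hb := IH b pbs Pl.
move=> z; rewrite inE => /orP [/eqP ->|zs]; last exact: Hb.
by apply: (He _ b) => //; apply: Hb; rewrite inE eqxx.
Qed.

Lemma path_back2 (V : eqType) (e : rel V) (P : pred V) :
  (forall u v, e u v -> P v -> P u) ->
  forall s h z, path e h s -> z \in s -> P z -> P h.
Proof.
move=> He; elim=> [//|b s IH] h z /= /andP [ehb pbs].
rewrite inE => /orP [/eqP ->|zs] Pz; apply: (He _ b ehb) => //.
exact: (IH b z).
Qed.

Lemma transition (V : choiceType) (c : seq V) (P : V -> Prop) x y :
  uniq c -> x \in c -> ~ P x -> y \in c -> P y ->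
  exists z, [/\ z \in c, ~ P z & P (next c z)].
Proof.
move=> Uc xc nPx yc Py; apply: NNPP => Hn.
pose e : rel V := fun u v => pb P u || ~~ pb P v.
have Hcyc : cycle e c.
  apply: (@sub_in_cycle _ (mem c) _ _ _ c _ (cycle_next Uc)); last first.
    by apply/allP.
  move=> u v uc vc /eqP <-.
  rewrite /e; case: (pbP P u) => //= nPu; apply/negP => /pbP Pn.
  by apply: Hn; exists u.
have He : forall u v, e u v -> pb P v -> pb P u.
  by move=> u v; rewrite /e => /orP [//|/negP h /h].
case: c Uc xc yc Hcyc {Hn} => [//|a t] _ xc yc /= Hp.
have Pa : pb P a.
  move: yc; rewrite inE => /orP [/eqP <-|yt]; first exact/pbP.
  have Py' : pb P y by apply/pbP.
  by apply: (path_back2 He Hp _ Py'); rewrite mem_rcons inE yt orbT.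
apply: nPx; apply/pbP.
apply: (path_back He Hp); first by rewrite last_rcons.
by move: xc; rewrite !(inE, mem_rcons) => /orP [->|->]; rewrite ?orbT.
Qed.

Lemma cx_union (V : choiceType) (X A B : {fset V} -> Prop) :
  is_complex A -> is_complex B -> (forall s, X s <-> A s \/ B s) -> is_complex X.
Proof.
move=> [neA sA] [neB sB] HX; split.
  by move=> s /HX [/neA|/neB].
move=> s t /HX [As|Bs] ts t0; apply/HX; [left; exact: (sA s)|right; exact: (sB s)].
Qed.

Lemma flag_side (V : choiceType) (X A B : {fset V} -> Prop) sigma s :
  is_flag A -> is_complex B -> A sigma ->
  (forall v, is_vertex A v -> is_vertex B v -> v \in sigma) ->
  (forall s, X s <-> A s \/ B s) ->
  s != fset0 -> (forall v, v \in s -> is_vertex A v) ->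
  (forall u v, u \in s -> v \in s -> u != v -> X [fset u; v]) -> A s.
Proof.
move=> [cA flA] cB As Hsh HX s0 Hv Hp; apply: flA => // u v us vs uv.
case/HX: (Hp u v us vs uv) => // Bp.
apply: (B_to_A cA cB As Hsh Bp) => w /fset2P [->|->]; exact: Hv.
Qed.

Lemma full_to_X (V : choiceType) (X A B : {fset V} -> Prop) sigma c :
  is_complex A -> is_complex B -> A sigma ->
  (forall v, is_vertex A v -> is_vertex B v -> v \in sigma) ->
  (forall s, X s <-> A s \/ B s) ->
  full_cycle A c -> full_cycle X c.
Proof.
move=> cA cB As Hsh HX [Uc Sc Hin Hfull]; split => //.
  by move=> s /Hin As'; apply/HX; left.
move=> s /HX [As'|Bs] sc; first exact: Hfull.
apply: Hfull => //; apply: (B_to_A cA cB As Hsh Bs) => v vs.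
by apply: Hin; left; exists v => //; apply: sc.
Qed.

Lemma full_side (V : choiceType) (X A B : {fset V} -> Prop) sigma c :
  is_complex A -> is_complex B -> A sigma ->
  (forall v, is_vertex A v -> is_vertex B v -> v \in sigma) ->
  (forall s, X s <-> A s \/ B s) ->
  full_cycle X c -> (forall x, x \in c -> is_vertex A x) -> full_cycle A c.
Proof.
move=> cA cB As Hsh HX [Uc Sc Hin Hfull] Hv; split => //.
  move=> s cs; case/HX: (Hin s cs) => // Bs.
  apply: (B_to_A cA cB As Hsh Bs) => v vs; apply: Hv; exact: (cycle_mem cs vs).
by move=> s As'; apply: Hfull; apply/HX; left.
Qed.

Lemma key_side (V : choiceType) (X A B : {fset V} -> Prop) sigma c :
  is_complex A -> is_complex B -> A sigma ->
  (forall v, is_vertex A v -> is_vertex B v -> v \in sigma) ->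
  (forall s, X s <-> A s \/ B s) ->
  full_cycle X c ->
  (forall x, x \in c -> is_vertex A x) \/ (forall x, x \in c -> is_vertex B x).
Proof.
move=> cA cB As Hsh HX [Uc Sc Hin Hfull].
have vX : forall x, x \in c -> is_vertex A x \/ is_vertex B x.
  by move=> x xc; apply/HX; apply: Hin; left; exists x.
have edge : forall z, z \in c -> A [fset z; next c z] \/ B [fset z; next c z].
  by move=> z zc; apply/HX; apply: Hin; right; exists z.
have m1 : forall a b : V, a \in [fset a; b] by move=> a b; apply/fset2P; left.
have m2 : forall a b : V, b \in [fset a; b] by move=> a b; apply/fset2P; right.
apply: NNPP => /not_or_and [H1 H2].
case: (not_all_ex_not _ _ H1) => x Hx.
have [xc nAx] := imply_to_and _ _ Hx.
case: (not_all_ex_not _ _ H2) => y Hy.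
have [yc nBy] := imply_to_and _ _ Hy.
have Ay : is_vertex A y by case: (vX y yc).
have Bx : is_vertex B x by case: (vX x xc).
have [z [zc nAz Ap]] := transition Uc xc nAx yc Ay.
have [z' [z'c nBz' Br]] := transition Uc yc nBy xc Bx.
have Bp : is_vertex B (next c z).
  case: (edge z zc) => h; last exact: (vert_of cB h (m2 _ _)).
  by case: nAz; exact: (vert_of cA h (m1 _ _)).
have Ar : is_vertex A (next c z').
  case: (edge z' z'c) => h; first exact: (vert_of cA h (m2 _ _)).
  by case: nBz'; exact: (vert_of cB h (m1 _ _)).
set p := next c z in Ap Bp; set r := next c z' in Br Ar.
have ninj : injective (next c) := can_inj (prev_next Uc).
have pr : p != r.
  apply/eqP => /ninj ezz; move: nBz'; rewrite -ezz => nBz.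
  by case: (vX z zc).
have Apr : A [fset p; r].
  case: cA => _ sA; apply: (sA sigma) => //; last exact: (ne0_of_mem (m1 _ _)).
  apply/fsubsetP => w /fset2P [->|->]; exact: Hsh.
have pc : p \in c by rewrite mem_next.
have rc : r \in c by rewrite mem_next.
have Hsub : {subset [fset p; r] <= c} by move=> w /fset2P [->|->].
case: (Hfull [fset p; r] (proj2 (HX _) (or_introl Apr)) Hsub) => [[w _ E]|[w _ E]].
  have := m1 p r; have := m2 p r; rewrite E => /fset1P hr /fset1P hp.
  by move: pr; rewrite hp hr eqxx.
have := m1 p r; have := m2 p r; rewrite E => /fset2P hr /fset2P hp.
case: hp => hp; case: hr => hr.
- by move: pr; rewrite hp hr eqxx.
- have : next c z' = next c p by rewrite -/r hr hp.
  by move=> /ninj ez; apply: nBz'; rewrite ez.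
- have : next c z = next c r by rewrite -/p hp hr.
  by move=> /ninj ez; apply: nAz; rewrite ez.
- by move: pr; rewrite hp hr eqxx.
Qed.

Lemma large_part (V : choiceType) (k : option nat) (X A B : {fset V} -> Prop) :
  is_flag A -> is_flag B -> glued_along_simplex X A B ->
  k_large k X -> k_large k A.
Proof.
move=> fA [cB _] [HX [sigma [As Bs Hsh]]] [_ noX]; split => // c fc.
apply: noX; exact: (full_to_X fA.1 cB As Hsh HX fc).
Qed.

Theorem lemma2p3 (V : choiceType) (k : option nat)
    (X A B : {fset V} -> Prop) :
  (if k is Some m then 4 <= m else true) ->
  is_flag A -> is_flag B ->
  glued_along_simplex X A B ->
  (k_large k X <-> k_large k A /\ k_large k B).
Proof.
move=> _ fA fB G; split.
  move=> kX; split; first exact: (large_part fA fB G kX).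
  exact: (large_part fB fA (glued_sym G) kX).
case: (G) => HX [sigma [As Bs Hsh]].
have HX' : forall s, X s <-> B s \/ A s by move=> s; rewrite HX; tauto.
have Hsh' : forall v, is_vertex B v -> is_vertex A v -> v \in sigma.
  by move=> v h1 h2; apply: Hsh.
move=> [[_ noA] [_ noB]]; have cA := fA.1; have cB := fB.1.
have cX := cx_union cA cB HX.
split; last first.
  move=> c fc; case: (key_side cA cB As Hsh HX fc) => hv.
    exact: (noA c (full_side cA cB As Hsh HX fc hv)).
  exact: (noB c (full_side cB cA Bs Hsh' HX' fc hv)).
split => // s s0 Hv Hp.
case: (classic (exists v, v \in s /\ ~ is_vertex A v)) => [[v0 [v0s nA0]]|nex].
  apply/HX; right; apply: (flag_side fB cA Bs Hsh' HX' s0) => // u us.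
  case: (eqVneq u v0) => [->|uv].
    by case/HX: (Hv v0 v0s) => // h; case: nA0.
  case/HX: (Hp u v0 us v0s uv) => h.
    by case: nA0; apply: (vert_of cA h); apply/fset2P; right.
  by apply: (vert_of cB h); apply/fset2P; left.
apply/HX; left; apply: (flag_side fA cB As Hsh HX s0) => // u us.
by apply: NNPP => nu; apply: nex; exists u.
Qed.
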